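(* Let $S$ be a semigroup generated by a set $A$ and let $T$ be a subsemigroup of $S$ generated by a set $B$ and having finite Green index $n$ in $S$. Let $s\in S$ and $a_1,\ldots,a_{m+k}\in A$, and suppose that the elements $sa_1\cdots a_{m+1}, sa_1\cdots a_{m+2},\ldots, sa_1\cdots a_{m+k}$ together lie in at least $n$ distinct $\mathcal{R}^T$-classes. Then there exist $i$ with $m<i\le m+k$ and $b_1,\ldots,b_j\in B$ such that $sa_1\cdots a_i=b_1\cdots b_j$.
   Context: For a subsemigroup $T$ of a semigroup $S$, the relative Green's relations on $S$ are: $u\,\mathcal{R}^T v$ iff $uT^1=vT^1$, $u\,\mathcal{L}^T v$ iff $T^1u=T^1v$, and $\mathcal{H}^T=\mathcal{R}^T\cap\mathcal{L}^T$, where $T^1=T\cup\{1\}$. The Green index of $T$ in $S$ is one plus the number of $\mathcal{H}^T$-classes contained in $S\setminus T$. *)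

(* Defs.v *)
From Stdlib Require Import List Arith.
Import ListNotations.

Section Semigroups.
Variable (S : Type) (mul : S -> S -> S).

Definition associative_op : Prop :=
  forall x y z : S, mul x (mul y z) = mul (mul x y) z.

Definition wprod (x0 : S) (xs : list S) : S := fold_left mul xs x0.

Definition generates_S (A : S -> Prop) : Prop :=
  forall x : S, exists a0 as_, A a0 /\ Forall A as_ /\ x = wprod a0 as_.

Definition subsemigroup (T : S -> Prop) : Prop :=
  forall x y, T x -> T y -> T (mul x y).

Definition generates_sub (T B : S -> Prop) : Prop :=
  (forall b, B b -> T b) /\
  (forall x, T x -> exists b0 bs, B b0 /\ Forall B bs /\ x = wprod b0 bs).

(* membership in u T^1 and T^1 u *)
Definition in_uT1 (T : S -> Prop) (u x : S) : Prop :=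
  x = u \/ exists t, T t /\ x = mul u t.
Definition in_T1u (T : S -> Prop) (u x : S) : Prop :=
  x = u \/ exists t, T t /\ x = mul t u.

Definition relR (T : S -> Prop) (u v : S) : Prop :=
  forall x, in_uT1 T u x <-> in_uT1 T v x.
Definition relL (T : S -> Prop) (u v : S) : Prop :=
  forall x, in_T1u T u x <-> in_T1u T v x.
Definition relH (T : S -> Prop) (u v : S) : Prop := relR T u v /\ relL T u v.

(* T has Green index n in S: n = 1 + number of H^T-classes contained in S \ T.
   The classes are counted via a complete, irredundant list of representatives.
   (Every H^T-class lies either inside T or inside S \ T.) *)
Definition green_index (T : S -> Prop) (n : nat) : Prop :=
  exists reps : list S,
    n = Datatypes.S (length reps) /\
    Forall (fun r => ~ T r) reps /\
    (forall i j, i < length reps -> j < length reps -> i <> j ->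
       forall d, ~ relH T (nth i reps d) (nth j reps d)) /\
    (forall x, ~ T x -> exists r, In r reps /\ relH T x r).

End Semigroups.

Arguments associative_op {S} mul.
Arguments wprod {S} mul x0 xs.
Arguments generates_S {S} mul A.
Arguments subsemigroup {S} mul T.
Arguments generates_sub {S} mul T B.
Arguments in_uT1 {S} mul T u x.
Arguments in_T1u {S} mul T u x.
Arguments relR {S} mul T u v.
Arguments relL {S} mul T u v.
Arguments relH {S} mul T u v.
Arguments green_index {S} mul T n.

(* Main.v *)
Require Import Defs.
From Stdlib Require Import List Arith Lia Classical ClassicalEpsilon.
Import ListNotations.

Theorem mainTheorem16
  (S : Type) (mul : S -> S -> S) (Hassoc : associative_op mul)
  (A : S -> Prop) (HA : generates_S mul A)
  (T : S -> Prop) (HT : subsemigroup mul T)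
  (B : S -> Prop) (HB : generates_sub mul T B)
  (n : nat) (Hn : green_index mul T n)
  (s : S) (m k : nat) (a : list S)
  (Ha_len : length a = m + k) (Ha_A : Forall A a)
  (Hclasses : exists idx : list nat,
      length idx = n /\
      Forall (fun i => m < i <= m + k) idx /\
      (forall p q, p < length idx -> q < length idx -> p <> q ->
         ~ relR mul T (fold_left mul (firstn (nth p idx 0) a) s)
                      (fold_left mul (firstn (nth q idx 0) a) s))) :
  exists i, m < i <= m + k /\
    exists b0 bs, B b0 /\ Forall B bs /\
      fold_left mul (firstn i a) s = wprod mul b0 bs.
Proof.
  destruct Hclasses as [idx [Hlen [Hrange Hdist]]].
  destruct Hn as [reps [Hnr [_ [_ Hcov]]]].
  set (u := fun i => fold_left mul (firstn i a) s).
  apply NNPP; intro Hno.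
  assert (HnT : forall i, In i idx -> ~ T (u i)).
  { intros i Hi HTi. apply Hno. exists i. split.
    - rewrite Forall_forall in Hrange. auto.
    - destruct HB as [_ HB2]. exact (HB2 _ HTi). }
  set (g := fun x => epsilon (inhabits s) (fun r => In r reps /\ relH mul T x r)).
  assert (Hg : forall i, In i idx -> In (g (u i)) reps /\ relH mul T (u i) (g (u i))).
  { intros i Hi. apply (epsilon_spec (inhabits s) (fun r => In r reps /\ relH mul T (u i) r)).
    apply Hcov. apply HnT; auto. }
  set (l := map (fun i => g (u i)) idx).
  assert (HND : NoDup l).
  { apply (proj2 (NoDup_nth l (g (u 0)))).
    unfold l; rewrite length_map. intros p q Hp Hq Heq.
    rewrite (map_nth (fun i => g (u i)) idx 0 p), (map_nth (fun i => g (u i)) idx 0 q) in Heq.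
    destruct (Nat.eq_dec p q) as [|Hpq]; auto. exfalso.
    apply (Hdist p q Hp Hq Hpq).
    destruct (Hg (nth p idx 0) (nth_In _ _ Hp)) as [_ [Rp _]].
    destruct (Hg (nth q idx 0) (nth_In _ _ Hq)) as [_ [Rq _]].
    fold (u (nth p idx 0)). fold (u (nth q idx 0)).
    rewrite Heq in Rp. intro x. rewrite (Rp x). rewrite (Rq x). tauto. }
  assert (Hincl : incl l reps).
  { intros r Hr. unfold l in Hr. apply in_map_iff in Hr.
    destruct Hr as [i [<- Hi]]. apply Hg; auto. }
  pose proof (NoDup_incl_length HND Hincl) as Hle.
  unfold l in Hle. rewrite length_map in Hle. lia.
Qed.
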